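(* Let $\ln f(y\mid\theta)=-\tfrac12(y-\theta)^2$. Fix $M\ge1$, reals $y_\mu,a_\mu$ and $s_\mu>0$ ($\mu=1,\dots,M$), and let $\gamma_0=-1/\max_\mu s_\mu$. For $\gamma>\gamma_0$ let $$\theta^*_\mu(\gamma)=\mathop{\mathrm{argmax}}_{\theta}\Big\{\gamma\ln f(y_\mu\mid\theta)-\frac{(\theta-a_\mu)^2}{2s_\mu}\Big\},\qquad g_\mu(\gamma)=y_\mu-\theta^*_\mu(\gamma),$$ $$\mathcal T(\gamma)=\frac1M\sum_{\mu=1}^M\Big[\gamma\ln f(y_\mu\mid\theta^*_\mu(\gamma))-\frac{(\theta^*_\mu(\gamma)-a_\mu)^2}{2s_\mu}\Big].$$ Then (i) $\mathcal T'(\gamma)=\frac1M\sum_\mu\ln f(y_\mu\mid\theta^*_\mu(\gamma))$ and for every integer $k\ge2$ and $\gamma>\gamma_0$, $$\mathcal T^{(k)}(\gamma)=\frac{k!}{2M}(-1)^k\sum_{\mu=1}^M g_\mu(\gamma)^2\Big(\frac{s_\mu}{1+\gamma s_\mu}\Big)^{k-1}.$$ (ii) Assume $y_\mu\neq a_\mu$ for some $\mu$, and put $g_\mu=g_\mu(1)$, $r_\mu=s_\mu/(1+s_\mu)$. Then the limit $L=\lim_{n\to\infty}\frac{\sum_\mu g_\mu^2r_\mu^{\,n}}{\sum_\mu g_\mu^2 r_\mu^{\,n-1}}$ exists, and the power series $\sum_{k\ge0}\frac{1}{k!}\mathcal T^{(k)}(1)\,\eta^k$ (the Taylor expansion of $\mathcal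 T$ about $\gamma=1$ in the increment $\eta$) converges when $|\eta| L<1$ and diverges when $|\eta|L>1$. In particular, if $s_\mu=s$ for all $\mu$, it converges iff... more precisely converges for $|\eta|\,\frac{s}{1+s}<1$ and diverges for $|\eta|\,\frac{s}{1+s}>1$.
   Context: This is the GAMP (generalized approximate message passing) description for the Gaussian likelihood: $a_\mu$ plays the role of the cavity estimate $\widehat\theta^{\setminus\mu}_\mu$ of the model parameter, $s_\mu$ the rescaled variance ${s_\theta}_\mu$, and $g_\mu$ the rescaled quantity $(\check g_{\mathrm{out}})_\mu$; $\mathcal T''(1)$ is the GAMP expression of the functional variance. The series expansion of $\mathcal T$ is the one underlying the widely applicable information criterion (WAIC). When the predictor entries are i.i.d. with mean 0 and variance 1, all $s_\mu$ coincide with a common value $s$. *)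

(* Defs.v *)
From Stdlib Require Import Reals Arith Factorial.
From Coquelicot Require Import Coquelicot.
Open Scope R_scope.

Fixpoint rsum (n : nat) (f : nat -> R) : R :=
  match n with
  | O => 0
  | S m => rsum m f + f m
  end.

Fixpoint rmax (n : nat) (s : nat -> R) : R :=
  match n with
  | O => 0
  | S O => s O
  | S m => Rmax (rmax m s) (s m)
  end.

Definition lnf (y theta : R) : R := - / 2 * (y - theta) ^ 2.

Definition gamma0 (M : nat) (s : nat -> R) : R := - / rmax M s.

Definition objective (y a s gamma theta : R) : R :=
  gamma * lnf y theta - (theta - a) ^ 2 / (2 * s).

Definition is_argmax_family (M : nat) (y a s : nat -> R) (th : R -> nat -> R) : Prop :=
  forall gamma, gamma0 M s < gamma -> forall mu, (mu < M)%nat ->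
    forall theta, objective (y mu) (a mu) (s mu) gamma theta
                  <= objective (y mu) (a mu) (s mu) gamma (th gamma mu).

Definition gfun (y : nat -> R) (th : R -> nat -> R) (gamma : R) (mu : nat) : R :=
  y mu - th gamma mu.

Definition Tfun (M : nat) (y a s : nat -> R) (th : R -> nat -> R) (gamma : R) : R :=
  / INR M * rsum M (fun mu =>
     objective (y mu) (a mu) (s mu) gamma (th gamma mu)).

(* Main.v *)
Require Import Defs.
From Stdlib Require Import Reals Arith Factorial Lra Lia Psatz.
From Coquelicot Require Import Coquelicot.
Open Scope R_scope.

Lemma rsum_ext n f g : (forall mu, (mu < n)%nat -> f mu = g mu) -> rsum n f = rsum n g.
Proof. induction n; simpl; intros H; [reflexivity|]. rewrite IHn by (intros; apply H; lia). rewrite H by lia. reflexivity. Qed.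

Lemma rsum_scal n k f : rsum n (fun mu => k * f mu) = k * rsum n f.
Proof. induction n; simpl; [ring|]. rewrite IHn; ring. Qed.

Lemma rsum_nonneg n f : (forall mu, (mu < n)%nat -> 0 <= f mu) -> 0 <= rsum n f.
Proof. induction n; simpl; intros H; [lra|]. assert (0 <= f n) by (apply H; lia).
 assert (0 <= rsum n f) by (apply IHn; intros; apply H; lia). lra. Qed.

Lemma rsum_le n f g : (forall mu, (mu < n)%nat -> f mu <= g mu) -> rsum n f <= rsum n g.
Proof. induction n; simpl; intros H; [lra|]. assert (f n <= g n) by (apply H; lia).
 assert (rsum n f <= rsum n g) by (apply IHn; intros; apply H; lia). lra. Qed.

Lemma rsum_ge_term n f m : (forall mu, (mu < n)%nat -> 0 <= f mu) -> (m < n)%nat -> f m <= rsum n f.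
Proof. induction n; simpl; intros H Hm; [lia|].
 assert (0 <= rsum n f) by (apply rsum_nonneg; intros; apply H; lia).
 destruct (Nat.eq_dec m n). subst. lra.
 assert (f m <= rsum n f) by (apply IHn; [intros; apply H; lia|lia]).
 assert (0 <= f n) by (apply H; lia). lra. Qed.

Lemma rsum_minus n f g : rsum n (fun mu => f mu - g mu) = rsum n f - rsum n g.
Proof. induction n; simpl; [ring|]. rewrite IHn; ring. Qed.

Lemma is_derive_rsum n (f : R -> nat -> R) f' x :
  (forall mu, (mu < n)%nat -> is_derive (fun t => f t mu) x (f' mu)) ->
  is_derive (fun t => rsum n (f t)) x (rsum n f').
Proof. induction n; simpl; intros H.
 - apply (is_derive_const 0).
 - apply (is_derive_plus (fun t => rsum n (f t)) (fun t => f t n)).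
   apply IHn; intros; apply H; lia. apply H; lia. Qed.

Lemma lim_rsum n (f : nat -> nat -> R) :
  (forall mu, (mu < n)%nat -> is_lim_seq (fun j => f j mu) 0) ->
  is_lim_seq (fun j => rsum n (f j)) 0.
Proof. induction n; simpl; intros H.
 - apply is_lim_seq_const.
 - replace 0 with (0 + 0) by ring. apply is_lim_seq_plus'.
   apply IHn; intros; apply H; lia. apply H; lia. Qed.

Lemma ex_series_rsum n (f : nat -> nat -> R) :
  (forall mu, (mu < n)%nat -> ex_series (fun j => f j mu)) ->
  ex_series (fun j => rsum n (f j)).
Proof. induction n; simpl; intros H.
 - apply (ex_series_ext (fun j => scal 0 ((/2)^j))). intros; unfold scal; simpl; unfold mult; simpl; ring.
   apply (ex_series_scal_l (V:=R_NormedModule) 0 (fun j => (/2)^j)). eexists; apply is_series_geom. rewrite Rabs_pos_eq; lra.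
 - apply (ex_series_plus (fun j => rsum n (f j)) (fun j => f j n)).
   apply IHn; intros; apply H; lia. apply H; lia. Qed.

Lemma rmax_ge n s mu : (mu < n)%nat -> s mu <= rmax n s.
Proof. induction n; intros H; [lia|]. destruct n.
 - simpl. replace mu with 0%nat by lia. lra.
 - change (rmax (S (S n)) s) with (Rmax (rmax (S n) s) (s (S n))).
   destruct (Nat.eq_dec mu (S n)). subst; apply Rmax_r.
   eapply Rle_trans; [apply IHn; lia|apply Rmax_l]. Qed.

Lemma rmax_att n s : (1 <= n)%nat -> exists mu, (mu < n)%nat /\ rmax n s = s mu.
Proof. induction n; intros H; [lia|]. destruct n.
 - exists 0%nat. split; [lia|reflexivity].
 - change (rmax (S (S n)) s) with (Rmax (rmax (S n) s) (s (S n))).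
   destruct (IHn ltac:(lia)) as [m [Hm E]]. unfold Rmax. destruct Rle_dec.
   exists (S n); split; [lia|reflexivity]. exists m; split; [lia|assumption]. Qed.

Lemma upos M s gamma mu : (1 <= M)%nat -> (forall mu, (mu < M)%nat -> 0 < s mu) ->
  gamma0 M s < gamma -> (mu < M)%nat -> 0 < 1 + gamma * s mu.
Proof. intros HM Hs Hg Hmu. unfold gamma0 in Hg.
 destruct (rmax_att M s HM) as [m [Hm E]].
 assert (Hmax : 0 < rmax M s) by (rewrite E; auto).
 assert (Hle := rmax_ge M s mu Hmu). assert (Hsm := Hs mu Hmu).
 set (m0 := rmax M s) in *.
 assert (gamma * m0 > -1). { apply Rmult_lt_compat_r with (r := m0) in Hg; auto.
   replace (- / m0 * m0) with (-1) in Hg by (field; lra). lra. }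
 destruct (Rle_lt_dec 0 gamma). nra. nra. Qed.

Lemma gamma0_neg M s : (1 <= M)%nat -> (forall mu, (mu < M)%nat -> 0 < s mu) -> gamma0 M s < 0.
Proof. intros HM Hs. unfold gamma0. destruct (rmax_att M s HM) as [m [Hm E]].
 rewrite E. assert (0 < s m) by auto. assert (0 < / s m) by (apply Rinv_0_lt_compat; auto). lra. Qed.

Lemma th_closed M y a s th gamma mu : (1 <= M)%nat -> (forall mu, (mu < M)%nat -> 0 < s mu) ->
  is_argmax_family M y a s th -> gamma0 M s < gamma -> (mu < M)%nat ->
  th gamma mu = (gamma * s mu * y mu + a mu) / (1 + gamma * s mu).
Proof. intros HM Hs Hth Hg Hmu.
 assert (Hu := upos M s gamma mu HM Hs Hg Hmu). assert (Hsm := Hs mu Hmu).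
 set (ts := (gamma * s mu * y mu + a mu) / (1 + gamma * s mu)).
 specialize (Hth gamma Hg mu Hmu ts).
 assert (Key : forall t, objective (y mu) (a mu) (s mu) gamma t =
   objective (y mu) (a mu) (s mu) gamma ts - (1 + gamma * s mu) / (2 * s mu) * (t - ts)^2).
 { intro t. unfold objective, lnf, ts. field. lra. }
 rewrite (Key (th gamma mu)) in Hth.
 assert (0 < (1 + gamma * s mu) / (2 * s mu)) by (apply Rdiv_lt_0_compat; lra).
 assert ((th gamma mu - ts)^2 <= 0).
 { destruct (Rle_lt_dec ((th gamma mu - ts)^2) 0); auto.
   assert (0 < (1 + gamma * s mu) / (2 * s mu) * (th gamma mu - ts)^2) by (apply Rmult_lt_0_compat; auto). lra. }
 nra. Qed.

Definition hk (s : R) (j : nat) (t : R) : R :=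
  (-1)^(S j) * INR (fact (S j)) * s^j * (/(1 + t * s))^(S (S j)).

Lemma hk_deriv s j t : 0 < 1 + t * s -> is_derive (hk s j) t (hk s (S j) t).
Proof. intros Hu. unfold hk. auto_derive. lra.
 replace (match j with 0%nat => 1 | S _ => INR j + 1 end) with (INR (S j)) by (destruct j; reflexivity).
 replace (INR (fact j + j * fact j)) with (INR (fact (S j))) by reflexivity.
 replace (INR (fact (S (S j)))) with ((INR (S j)+1) * (INR (S j) * INR (fact j)))
   by (rewrite !fact_simpl, !mult_INR, (S_INR (S j)); ring).
 rewrite fact_simpl, mult_INR. rewrite <- !tech_pow_Rmult.
 set (A := (-1)^j); set (B := s^j); set (C := (/(1+t*s))^j).
 field. lra. Qed.

Definition Gk M (y a s : nat -> R) j t :=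
  / INR M * rsum M (fun mu => / 2 * (y mu - a mu)^2 * hk (s mu) j t).
Definition Fcl M (y a s : nat -> R) t :=
  / INR M * rsum M (fun mu => - / 2 * (y mu - a mu)^2 * (t / (1 + t * s mu))).

Lemma T_eq (M : nat) (y a s : nat -> R) (th : R -> nat -> R) (HM : (1 <= M)%nat) (Hs : forall mu, (mu < M)%nat -> 0 < s mu) (Hth : is_argmax_family M y a s th) g : gamma0 M s < g -> Tfun M y a s th g = Fcl M y a s g.
Proof. intros Hg. unfold Tfun, Fcl. f_equal. apply rsum_ext. intros mu Hmu.
 rewrite (th_closed M y a s th g mu HM Hs Hth Hg Hmu).
 assert (Hu := upos M s g mu HM Hs Hg Hmu). assert (Hsm := Hs mu Hmu).
 unfold objective, lnf. field. lra. Qed.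

Lemma loc_gt (M : nat) (y a s : nat -> R) (th : R -> nat -> R) (HM : (1 <= M)%nat) (Hs : forall mu, (mu < M)%nat -> 0 < s mu) (Hth : is_argmax_family M y a s th) g : gamma0 M s < g -> locally g (fun t => gamma0 M s < t).
Proof. intros Hg. apply (open_gt (gamma0 M s) g Hg). Qed.

Lemma Fcl_deriv (M : nat) (y a s : nat -> R) (th : R -> nat -> R) (HM : (1 <= M)%nat) (Hs : forall mu, (mu < M)%nat -> 0 < s mu) (Hth : is_argmax_family M y a s th) g : gamma0 M s < g -> is_derive (Fcl M y a s) g (Gk M y a s 0 g).
Proof. intros Hg. unfold Fcl, Gk. apply is_derive_scal.
 apply (is_derive_rsum M (fun t mu => - / 2 * (y mu - a mu)^2 * (t / (1 + t * s mu)))).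
 intros mu Hmu. assert (Hu := upos M s g mu HM Hs Hg Hmu).
 unfold hk. auto_derive. lra. simpl. field. lra. Qed.

Lemma Gk_deriv (M : nat) (y a s : nat -> R) (th : R -> nat -> R) (HM : (1 <= M)%nat) (Hs : forall mu, (mu < M)%nat -> 0 < s mu) (Hth : is_argmax_family M y a s th) j g : gamma0 M s < g -> is_derive (Gk M y a s j) g (Gk M y a s (S j) g).
Proof. intros Hg. unfold Gk. apply is_derive_scal.
 apply (is_derive_rsum M (fun t mu => / 2 * (y mu - a mu)^2 * hk (s mu) j t)).
 intros mu Hmu. assert (Hu := upos M s g mu HM Hs Hg Hmu).
 apply is_derive_scal. apply hk_deriv. lra. Qed.

Lemma DT (M : nat) (y a s : nat -> R) (th : R -> nat -> R) (HM : (1 <= M)%nat) (Hs : forall mu, (mu < M)%nat -> 0 < s mu) (Hth : is_argmax_family M y a s th) j g : gamma0 M s < g -> is_derive (Derive_n (Tfun M y a s th) j) g (Gk M y a s j g).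
Proof. revert g. induction j; intros g Hg.
 - simpl. apply (is_derive_ext_loc (Fcl M y a s)).
   + eapply filter_imp; [|apply (loc_gt M y a s th HM Hs Hth g Hg)]. intros t Ht. symmetry; apply (T_eq M y a s th HM Hs Hth); auto.
   + apply (Fcl_deriv M y a s th HM Hs Hth); auto.
 - simpl. apply (is_derive_ext_loc (Gk M y a s j)).
   + eapply filter_imp; [|apply (loc_gt M y a s th HM Hs Hth g Hg)]. intros t Ht. symmetry. apply is_derive_unique. apply IHj; auto.
   + apply (Gk_deriv M y a s th HM Hs Hth); auto. Qed.

Lemma DnT (M : nat) (y a s : nat -> R) (th : R -> nat -> R) (HM : (1 <= M)%nat) (Hs : forall mu, (mu < M)%nat -> 0 < s mu) (Hth : is_argmax_family M y a s th) j g : gamma0 M s < g -> Derive_n (Tfun M y a s th) (S j) g = Gk M y a s j g.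
Proof. intros Hg. simpl. apply is_derive_unique. apply (DT M y a s th HM Hs Hth); auto. Qed.


Lemma ex_series_zero : ex_series (fun _ : nat => 0).
Proof. apply (ex_series_ext (fun j => scal 0 ((/2)^j))). intros; unfold scal; simpl; unfold mult; simpl; ring.
 apply (ex_series_scal_l (V:=R_NormedModule) 0 (fun j => (/2)^j)). eexists; apply is_series_geom. rewrite Rabs_pos_eq; lra. Qed.

Lemma conv n c r x Rm : (forall mu, (mu < n)%nat -> c mu <> 0 -> 0 <= r mu <= Rm) -> Rabs x * Rm < 1 ->
  ex_series (fun j => rsum n (fun mu => c mu * (x * r mu)^j)).
Proof. intros H Hx. apply (ex_series_rsum n (fun j mu => c mu * (x * r mu)^j)).
 intros mu Hmu. destruct (Req_dec (c mu) 0) as [E|E].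
 - apply (ex_series_ext (fun _ => 0)). intros j. rewrite E. simpl. rewrite Rmult_0_l. reflexivity. apply ex_series_zero.
 - destruct (H mu Hmu E) as [H1 H2].
   apply (ex_series_scal_l (V:=R_NormedModule) (c mu) (fun j => (x * r mu)^j)).
   eexists; apply is_series_geom. rewrite Rabs_mult, (Rabs_pos_eq (r mu)) by lra.
   assert (0 <= Rabs x) by apply Rabs_pos. nra. Qed.

Lemma rsum_pow_factor n c r x j : rsum n (fun mu => c mu * (x * r mu)^j) = x^j * rsum n (fun mu => c mu * r mu ^ j).
Proof. rewrite <- rsum_scal. apply rsum_ext. intros. rewrite Rpow_mult_distr. ring. Qed.

Lemma div n c r x Rm m K : (m < n)%nat -> (forall mu, (mu < n)%nat -> 0 <= c mu) ->
  (forall mu, (mu < n)%nat -> 0 <= r mu) -> 0 < c m -> r m = Rm -> Rabs x * Rm > 1 -> K <> 0 ->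
  ~ ex_series (fun j => K * rsum n (fun mu => c mu * (x * r mu)^j)).
Proof. intros Hm Hc Hr Hcm Hrm Hx HK Hex.
 apply ex_series_lim_0 in Hex. apply is_lim_seq_abs in Hex. simpl in Hex. rewrite Rabs_R0 in Hex.
 assert (HKp : 0 < Rabs K) by (apply Rabs_pos_lt; auto).
 assert (Hle : forall j, Rabs K * c m <= Rabs (K * rsum n (fun mu => c mu * (x * r mu)^j))).
 { intro j. rewrite rsum_pow_factor. rewrite !Rabs_mult, <- RPow_abs.
   assert (Hs : 0 <= rsum n (fun mu => c mu * r mu ^ j)).
   { apply rsum_nonneg. intros. apply Rmult_le_pos; auto. apply pow_le; auto. }
   rewrite (Rabs_pos_eq _ Hs).
   assert (Hge : c m * r m ^ j <= rsum n (fun mu => c mu * r mu ^ j)).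
   { apply (rsum_ge_term n (fun mu => c mu * r mu ^ j)); auto. intros. apply Rmult_le_pos; auto. apply pow_le; auto. }
   assert (H1 : 1 <= (Rabs x * Rm)^j) by (apply pow_R1_Rle; lra).
   rewrite Rpow_mult_distr in H1. rewrite Hrm in Hge.
   assert (0 <= Rabs x ^ j) by (apply pow_le, Rabs_pos).
   assert (0 <= Rm ^ j) by (apply pow_le; rewrite <- Hrm; auto).
   assert (c m <= Rabs x ^ j * (c m * Rm^j)) by nra.
   assert (Rabs x ^ j * (c m * Rm^j) <= Rabs x ^ j * rsum n (fun mu => c mu * r mu ^ j)) by (apply Rmult_le_compat_l; auto).
   nra. }
 pose proof (is_lim_seq_le _ _ _ _ Hle (is_lim_seq_const (Rabs K * c m)) Hex) as Hb.
 simpl in Hb. nra. Qed.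

Lemma ratio_lim n c r Rm m : (m < n)%nat -> (forall mu, (mu < n)%nat -> 0 <= c mu) ->
  (forall mu, (mu < n)%nat -> 0 < r mu) -> (forall mu, (mu < n)%nat -> c mu <> 0 -> r mu <= Rm) ->
  0 < c m -> r m = Rm ->
  is_lim_seq (fun k => rsum n (fun mu => c mu * r mu ^ S k) / rsum n (fun mu => c mu * r mu ^ k)) Rm.
Proof. intros Hm Hc Hr HR Hcm Hrm.
 assert (HRp : 0 < Rm) by (rewrite <- Hrm; auto).
 set (E := fun k => rsum n (fun mu => c mu * (Rm - r mu) * (r mu / Rm)^k)).
 assert (HE0 : is_lim_seq E 0).
 { apply (lim_rsum n (fun k mu => c mu * (Rm - r mu) * (r mu / Rm)^k)). intros mu Hmu.
   destruct (Req_dec (c mu) 0) as [Ec|Ec].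
   - apply (is_lim_seq_ext (fun _ => 0)). intros; rewrite Ec; ring. apply is_lim_seq_const.
   - assert (Hrr := HR mu Hmu Ec). assert (Hrp := Hr mu Hmu). destruct (Rle_lt_or_eq_dec _ _ Hrr) as [Hlt|Heq].
     + replace 0 with (c mu * (Rm - r mu) * 0) by ring.
       apply (is_lim_seq_scal_l (fun k => (r mu / Rm)^k) (c mu * (Rm - r mu)) 0).
       apply is_lim_seq_geom. rewrite Rabs_pos_eq.
       apply Rmult_lt_reg_r with Rm; auto. unfold Rdiv. rewrite Rmult_assoc, Rinv_l; lra.
       apply Rdiv_le_0_compat; lra.
     + apply (is_lim_seq_ext (fun _ => 0)). intros; rewrite Heq; ring. apply is_lim_seq_const. }
 assert (HEnn : forall k, 0 <= E k).
 { intro k. apply rsum_nonneg. intros mu Hmu. destruct (Req_dec (c mu) 0) as [Ec|Ec].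
   rewrite Ec; lra. assert (Hrr := HR mu Hmu Ec). assert (Hrp := Hr mu Hmu).
   apply Rmult_le_pos. apply Rmult_le_pos; auto; lra. apply pow_le. apply Rdiv_le_0_compat; lra. }
 apply (is_lim_seq_le_le (fun k => Rm - E k / c m) _ (fun _ => Rm)).
 2: { replace (Finite Rm) with (Finite (Rm - 0 / c m)) by (f_equal; field; lra).
      apply is_lim_seq_minus'. apply is_lim_seq_const.
      apply (is_lim_seq_ext (fun k => / c m * E k)). intros; unfold Rdiv; ring.
      replace (0 / c m) with (/ c m * 0) by (unfold Rdiv; ring).
      apply (is_lim_seq_scal_l E (/ c m) 0). auto. }
 2: apply is_lim_seq_const.
 intro k. set (Sk := rsum n (fun mu => c mu * r mu ^ k)).
 assert (HSge : c m * Rm ^ k <= Sk).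
 { rewrite <- Hrm. apply (rsum_ge_term n (fun mu => c mu * r mu ^ k)); auto.
   intros. apply Rmult_le_pos; auto. apply pow_le; auto. left; auto. }
 assert (HRk : 0 < Rm ^ k) by (apply pow_lt; auto).
 assert (HSp : 0 < Sk) by (assert (0 < c m * Rm ^ k) by (apply Rmult_lt_0_compat; auto); lra).
 assert (Hid : rsum n (fun mu => c mu * r mu ^ S k) = Rm * Sk - Rm ^ k * E k).
 { unfold Sk, E. rewrite <- !rsum_scal, <- rsum_minus. apply rsum_ext. intros mu Hmu.
   assert (Hrp := Hr mu Hmu).
   assert (Rm ^ k * (r mu / Rm) ^ k = r mu ^ k).
   { rewrite <- Rpow_mult_distr. f_equal. field. lra. }
   simpl. replace (Rm ^ k * (c mu * (Rm - r mu) * (r mu / Rm) ^ k)) with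
     (c mu * (Rm - r mu) * (Rm ^ k * (r mu / Rm) ^ k)) by ring.
   rewrite H. ring. }
 rewrite Hid. split.
 - assert (Rm ^ k * E k / Sk <= E k / c m).
   { apply Rmult_le_reg_r with (Sk * c m). apply Rmult_lt_0_compat; auto.
     replace (Rm ^ k * E k / Sk * (Sk * c m)) with (c m * Rm ^ k * E k) by (field; lra).
     replace (E k / c m * (Sk * c m)) with (Sk * E k) by (field; lra).
     apply Rmult_le_compat_r; auto. }
   replace ((Rm * Sk - Rm ^ k * E k) / Sk) with (Rm - Rm ^ k * E k / Sk) by (field; lra). lra.
 - replace ((Rm * Sk - Rm ^ k * E k) / Sk) with (Rm - Rm ^ k * E k / Sk) by (field; lra).
   assert (0 <= Rm ^ k * E k / Sk). { apply Rdiv_le_0_compat; auto. apply Rmult_le_pos; auto; lra. }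
   lra. Qed.

Lemma gfun_closed M y a s th g mu : (1 <= M)%nat -> (forall mu, (mu < M)%nat -> 0 < s mu) ->
  is_argmax_family M y a s th -> gamma0 M s < g -> (mu < M)%nat ->
  gfun y th g mu = (y mu - a mu) / (1 + g * s mu).
Proof. intros HM Hs Hth Hg Hmu. unfold gfun. rewrite (th_closed M y a s th g mu HM Hs Hth Hg Hmu).
 assert (Hu := upos M s g mu HM Hs Hg Hmu). field. lra. Qed.

Lemma rsum_scal3 n k1 k2 f : k1 * rsum n f * k2 = rsum n (fun mu => k1 * f mu * k2).
Proof. rewrite (rsum_ext n (fun mu => k1 * f mu * k2) (fun mu => (k1 * k2) * f mu)) by (intros; ring).
 rewrite rsum_scal. ring. Qed.

Theorem theorem4 (M : nat) (y a s : nat -> R) (th : R -> nat -> R)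
  (HM : (1 <= M)%nat)
  (Hs : forall mu, (mu < M)%nat -> 0 < s mu)
  (Hth : is_argmax_family M y a s th) :
  (* (i) *)
  (forall gamma, gamma0 M s < gamma ->
     is_derive (Tfun M y a s th) gamma
       (/ INR M * rsum M (fun mu => lnf (y mu) (th gamma mu)))) /\
  (forall (k : nat) gamma, (2 <= k)%nat -> gamma0 M s < gamma ->
     is_derive_n (Tfun M y a s th) k gamma
       (INR (fact k) / (2 * INR M) * (-1) ^ k *
        rsum M (fun mu => gfun y th gamma mu ^ 2
                          * (s mu / (1 + gamma * s mu)) ^ (k - 1)))) /\
  (* (ii) *)
  ((exists mu, (mu < M)%nat /\ y mu <> a mu) ->
   let gm := fun mu => gfun y th 1 mu in
   let r := fun mu => s mu / (1 + s mu) in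
   let taylor := fun eta : R => fun k : nat =>
       / INR (fact k) * Derive_n (Tfun M y a s th) k 1 * eta ^ k in
   (exists L : R,
      is_lim_seq (fun n : nat =>
          rsum M (fun mu => gm mu ^ 2 * r mu ^ (S n))
        / rsum M (fun mu => gm mu ^ 2 * r mu ^ n)) (Finite L) /\
      (forall eta, Rabs eta * L < 1 -> ex_series (taylor eta)) /\
      (forall eta, Rabs eta * L > 1 -> ~ ex_series (taylor eta))) /\
   (forall s0 : R, (forall mu, (mu < M)%nat -> s mu = s0) ->
      (forall eta, Rabs eta * (s0 / (1 + s0)) < 1 -> ex_series (taylor eta)) /\
      (forall eta, Rabs eta * (s0 / (1 + s0)) > 1 -> ~ ex_series (taylor eta)))).
Proof.
 assert (HMp : 0 < INR M) by (apply lt_0_INR; lia).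
 split; [|split].
 - intros g Hg. pose proof (DT M y a s th HM Hs Hth 0 g Hg) as D. simpl in D.
   replace (/ INR M * rsum M (fun mu => lnf (y mu) (th g mu))) with (Gk M y a s 0 g); auto.
   unfold Gk. f_equal. apply rsum_ext. intros mu Hmu.
   rewrite (th_closed M y a s th g mu HM Hs Hth Hg Hmu).
   assert (Hu := upos M s g mu HM Hs Hg Hmu). unfold lnf, hk. simpl. field. lra.
 - intros k g Hk Hg. destruct k as [|j]; [lia|]. simpl is_derive_n.
   pose proof (DT M y a s th HM Hs Hth j g Hg) as D.
   replace (S j - 1)%nat with j by lia.
   match goal with |- is_derive _ _ ?l => replace l with (Gk M y a s j g); auto end.
   unfold Gk. rewrite <- rsum_scal. rewrite <- rsum_scal. apply rsum_ext. intros mu Hmu.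
   rewrite (gfun_closed M y a s th g mu HM Hs Hth Hg Hmu).
   assert (Hu := upos M s g mu HM Hs Hg Hmu). unfold hk.
   rewrite Nat.sub_0_r. replace (INR (fact j + j * fact j)) with (INR (fact (S j))) by reflexivity.
   replace (s mu / (1 + g * s mu)) with (s mu * / (1 + g * s mu)) by reflexivity.
   rewrite Rpow_mult_distr. rewrite <- !tech_pow_Rmult.
   assert (INR (fact (S j)) <> 0) by apply INR_fact_neq_0.
   set (A := (-1)^j); set (B := s mu ^ j); set (C := (/(1 + g * s mu))^j). field. lra.
 - intros [mu0 [Hmu0 Hya]] gm r taylor.
   assert (H1 : gamma0 M s < 1) by (pose proof (gamma0_neg M s HM Hs); lra).
   set (c := fun mu => gm mu ^ 2).
   assert (Hc : forall mu, (mu < M)%nat -> 0 <= c mu) by (intros; unfold c; apply pow2_ge_0).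
   assert (Hr : forall mu, (mu < M)%nat -> 0 < r mu).
   { intros mu Hmu. unfold r. assert (Hsm := Hs mu Hmu). apply Rdiv_lt_0_compat; lra. }
   assert (Hc0 : c mu0 <> 0).
   { unfold c, gm. rewrite (gfun_closed M y a s th 1 mu0 HM Hs Hth H1 Hmu0).
     apply pow_nonzero. assert (Hsm := Hs mu0 Hmu0). unfold Rdiv. apply Rmult_integral_contrapositive.
     split. lra. apply Rinv_neq_0_compat. lra. }
   assert (Htay : forall eta j, taylor eta (S j) =
       (- eta * / (2 * INR M)) * rsum M (fun mu => c mu * (- eta * r mu) ^ j)).
   { intros eta j. unfold taylor. rewrite (DnT M y a s th HM Hs Hth j 1 H1).
     unfold Gk. rewrite <- rsum_scal. rewrite rsum_scal3. rewrite <- rsum_scal. apply rsum_ext.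
     intros mu Hmu. unfold c, gm, r, hk. rewrite (gfun_closed M y a s th 1 mu HM Hs Hth H1 Hmu).
     assert (Hsm := Hs mu Hmu). rewrite Rmult_1_l.
     replace (- eta * (s mu / (1 + s mu))) with (-1 * eta * s mu * / (1 + s mu)) by (unfold Rdiv; ring).
     rewrite !Rpow_mult_distr. rewrite <- !tech_pow_Rmult.
     assert (INR (fact (S j)) <> 0) by apply INR_fact_neq_0.
     set (A := (-1)^j); set (B := s mu ^ j); set (C := (/(1 + s mu))^j); set (D := eta ^ j). field. lra. }
   assert (Hser : forall eta, ex_series (taylor eta) <->
       ex_series (fun j => (- eta * / (2 * INR M)) * rsum M (fun mu => c mu * (- eta * r mu) ^ j))).
   { intro eta. rewrite (ex_series_incr_1 (taylor eta)). split; intro HH;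
     (eapply ex_series_ext; [|exact HH]); intro j; simpl; rewrite Htay; reflexivity. }
   assert (Hconv : forall eta Rm, (forall mu, (mu < M)%nat -> c mu <> 0 -> 0 <= r mu <= Rm) ->
      Rabs eta * Rm < 1 -> ex_series (taylor eta)).
   { intros eta Rm HH Hlt. apply Hser.
     apply (ex_series_scal_l (V:=R_NormedModule) (- eta * / (2 * INR M))
              (fun j => rsum M (fun mu => c mu * (- eta * r mu) ^ j))).
     apply (conv M c r (- eta) Rm); auto. rewrite Rabs_Ropp; auto. }
   assert (Hdiv : forall eta m, (m < M)%nat -> 0 < c m -> Rabs eta * r m > 1 -> ~ ex_series (taylor eta)).
   { intros eta m Hm Hcm Hgt HH. apply Hser in HH. revert HH.
     apply (div M c r (- eta) (r m) m); auto.
     intros; left; auto. rewrite Rabs_Ropp; auto.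
     assert (eta <> 0). { intro E. rewrite E, Rabs_R0 in Hgt. lra. }
     apply Rmult_integral_contrapositive. split. lra. apply Rinv_neq_0_compat. lra. }
   split.
   + set (q := fun mu => if Req_EM_T (c mu) 0 then 0 else r mu).
     set (Rm := rmax M q).
     destruct (rmax_att M q HM) as [m [Hm Em]]. fold Rm in Em.
     assert (Hq : forall mu, (mu < M)%nat -> c mu <> 0 -> r mu <= Rm).
     { intros mu Hmu Hne. pose proof (rmax_ge M q mu Hmu). unfold q in H. fold Rm in H.
       destruct (Req_EM_T (c mu) 0); [contradiction|auto]. }
     assert (HRp : 0 < Rm) by (pose proof (Hq mu0 Hmu0 Hc0); pose proof (Hr mu0 Hmu0); lra).
     assert (Hcm : c m <> 0 /\ r m = Rm).
     { unfold q in Em. destruct (Req_EM_T (c m) 0). lra. split; auto. }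
     destruct Hcm as [Hcm Hrm].
     assert (Hcmp : 0 < c m) by (pose proof (Hc m Hm); lra).
     exists Rm. split; [|split].
     * apply (ratio_lim M c r Rm m); auto.
     * intros eta Hlt. apply (Hconv eta Rm); auto. intros mu Hmu Hne. split. left; auto. auto.
     * intros eta Hgt. apply (Hdiv eta m); auto. rewrite Hrm; auto.
   + intros s0 Hs0. assert (Hr0 : forall mu, (mu < M)%nat -> r mu = s0 / (1 + s0)).
     { intros mu Hmu. unfold r. rewrite Hs0; auto. }
     split.
     * intros eta Hlt. apply (Hconv eta (s0 / (1 + s0))); auto. intros mu Hmu Hne.
       rewrite <- (Hr0 mu Hmu). split; [left; auto|lra].
     * intros eta Hgt. apply (Hdiv eta mu0); auto.
       pose proof (Hc mu0 Hmu0); lra. rewrite Hr0; auto.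
Qed.
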